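(* Let $d_1,d_2,b_1,b_2$ be integers with $2\leq b_i\leq d_i/2$ for $i=1,2$. For $i=1,2$ let $T_i\in S^{d_i}\mathbb{C}^2$ be a binary form with cactus rank $c_{d_i}(T_i)=b_i$ and $[T_i]\in\langle\nu_{d_i}(Z[b_i])\rangle$, and let $T=T_1\otimes T_2$. Then $R_{d_1,d_2}(T)\leq d_1b_2+d_2b_1+b_1b_2-1$.
   Context: Identify $S^d\mathbb{C}^2$ with binary forms of degree $d$ in a basis $\{x,y\}$, with dual coordinates $\partial_x,\partial_y$. For $b\geq1$, $Z[b]\subseteq\mathbb{P}^1$ is the zero-dimensional scheme of degree $b$ supported at $[x]$, with ideal $(\partial_y^b)$. $\nu_d:\mathbb{P}^1\to\mathbb{P}(S^d\mathbb{C}^2)$, $[v]\mapsto[v^d]$, is the Veronese embedding; $\langle Y\rangle$ denotes linear span of a subscheme. The cactus rank $c_d(f)$ is the minimal degree of a zero-dimensional scheme $A\subseteq\mathbb{P}^1$ with $[f]\in\langle\nu_d(A)\rangle$. The partially symmetric rank $R_{d_1,d_2}(T)$ is the minimal $r$ with $T=\sum_{i=1}^r v_{i,1}^{\otimes d_1}\otimes v_{i,2}^{\otimes d_2}$, $v_{i,j}\in\mathbb{C}^2$. *)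

(* Defs.v *)
From HB Require Import structures.
From mathcomp Require Import all_boot all_order all_algebra.
From mathcomp Require Import reals.
From mathcomp Require Import complex.
From mathcomp Require Import mpoly.
Import GRing.Theory.

Set Implicit Arguments.
Unset Strict Implicit.
Unset Printing Implicit Defensive.

Local Open Scope ring_scope.

(* Binary forms of degree d over a field F: homogeneous elements of degree d of
   {mpoly F[2]}, variables 'X_0 = x and 'X_1 = y.  Forms in the dual
   coordinates (partial_x, partial_y) are represented by the same type, with
   'X_0 = partial_x and 'X_1 = partial_y. *)

Section BinaryForms.
Variable F : fieldType.

Definition vx : {mpoly F[2]} := 'X_(@inord 1 0).
Definition vy : {mpoly F[2]} := 'X_(@inord 1 1).

Definition apolar (g f : {mpoly F[2]}) : {mpoly F[2]} :=
  \sum_(m <- msupp g) g@_m *: f^`M[m].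

(* A zero-dimensional subscheme A of P^1 of degree b is given by its (principal,
   saturated) homogeneous ideal (g), with g a nonzero binary form of degree b in
   the dual coordinates.  [f] lies in the linear span <nu_d(A)> iff f is
   annihilated (under the apolarity pairing S^d(C^2)^* x S^d C^2 -> C) by every
   element of the degree-d part (I_A)_d = { g*q homogeneous of degree d }. *)
Definition in_scheme_span (d : nat) (g f : {mpoly F[2]}) : Prop :=
  forall q : {mpoly F[2]}, g * q \is d.-homog -> apolar (g * q) f = 0.

Definition scheme_gen (b : nat) (g : {mpoly F[2]}) : Prop :=
  g != 0 /\ g \is b.-homog.

(* Z[b]: degree-b scheme supported at [x], ideal (partial_y ^ b) *)
Definition Zgen (b : nat) : {mpoly F[2]} := vy ^+ b.

Definition cactus_rank_eq (d : nat) (f : {mpoly F[2]}) (b : nat) : Prop :=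
  (exists g, scheme_gen b g /\ in_scheme_span d g f) /\
  (forall (b' : nat) g, scheme_gen b' g -> in_scheme_span d g f -> (b <= b')%N).

(* S^{d1} C^2 (x) S^{d2} C^2 as bihomogeneous forms in x1,y1,x2,y2
   ('X_0,'X_1,'X_2,'X_3 of {mpoly F[4]}). *)
Definition v4 (k : nat) : {mpoly F[4]} := 'X_(@inord 3 k).

Definition embed1 (p : {mpoly F[2]}) : {mpoly F[4]} :=
  p \mPo [tuple v4 0; v4 1].
Definition embed2 (p : {mpoly F[2]}) : {mpoly F[4]} :=
  p \mPo [tuple v4 2; v4 3].

Definition tens (p q : {mpoly F[2]}) : {mpoly F[4]} := embed1 p * embed2 q.

(* T = sum_{i<r} v_{i,1}^{(x) d1} (x) v_{i,2}^{(x) d2}, where v^{(x) d} with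
   v = (a,b) corresponds to the form (a x + b y)^d. *)
Definition psym_decomp (d1 d2 r : nat) (T : {mpoly F[4]}) : Prop :=
  exists a b c e : 'I_r -> F,
    T = \sum_(i < r) (a i *: v4 0 + b i *: v4 1) ^+ d1
                     * (c i *: v4 2 + e i *: v4 3) ^+ d2.

Definition psym_rank_le (d1 d2 : nat) (T : {mpoly F[4]}) (N : nat) : Prop :=
  exists r, (r <= N)%N /\ psym_decomp d1 d2 r T.

End BinaryForms.

(* Main.v *)
From HB Require Import structures.
From mathcomp Require Import all_boot all_order all_algebra.
From mathcomp Require Import reals.
From mathcomp Require Import complex.
From mathcomp Require Import mpoly.
From mathcomp Require Import cyclic separable cyclotomic.
Import GRing.Theory Num.Theory.
Set Implicit Arguments.
Unset Strict Implicit.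
Local Open Scope ring_scope.
From mathcomp Require Import zify ring.
Require Import Defs.

Definition mj (d j : nat) : 'X_{1..2} :=
  [multinom (if (i : nat) == 0%N then (d - j)%N else j) | i < 2].

Lemma i2_cases (i : 'I_2) : i = ord0 \/ i = inord 1.
Proof.
case: i => [[|[|k]] hk]; [left | right | by []]; apply: val_inj => //=.
by rewrite inordK.
Qed.

Lemma mdeg2 (m : 'X_{1..2}) : mdeg m = (m ord0 + m (inord 1))%N.
Proof.
rewrite mdegE !big_ord_recl big_ord0 addn0; congr (_ + m _)%N.
by apply: val_inj; rewrite /= inordK.
Qed.

Lemma mj0 d j : mj d j ord0 = (d - j)%N.
Proof. by rewrite mnmE. Qed.

Lemma mj1 d j : mj d j (inord 1) = j.
Proof. by rewrite mnmE inordK. Qed.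

Lemma mdeg_mj d j : (j <= d)%N -> mdeg (mj d j) = d.
Proof. by move=> h; rewrite mdeg2 mj0 mj1 subnK. Qed.

Lemma mj_eq (m : 'X_{1..2}) d : mdeg m = d -> m = mj d (m (inord 1)).
Proof.
rewrite mdeg2 => hd; apply/mnmP => i.
case: (i2_cases i) => ->; rewrite ?mj0 ?mj1 //; lia.
Qed.

Lemma mj_inj d j j' : (j <= d)%N -> (j' <= d)%N -> mj d j = mj d j' -> j = j'.
Proof. by move=> _ _ /(congr1 (fun m : 'X_{1..2} => m (inord 1))); rewrite !mj1. Qed.

Lemma homog2 (F : ringType) (p : {mpoly F[2]}) d : p \is d.-homog ->
  p = \sum_(j < d.+1) p@_(mj d j) *: 'X_[mj d j].
Proof.
move=> hp; apply/mpolyP => m.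
rewrite raddf_sum /=.
under eq_bigr => j _ do rewrite mcoeffZ mcoeffX.
case: (eqVneq (mdeg m) d) => hm.
  have hm1 : (m (inord 1) < d.+1)%N by rewrite ltnS -hm mdeg2 leq_addl.
  rewrite (bigD1 (Ordinal hm1)) //= -(mj_eq hm) eqxx mulr1 big1 ?addr0 //.
  move=> j hj; case: eqP; rewrite ?mulr0 // => e.
  move: hj; rewrite -(inj_eq val_inj) /=.
  by rewrite -e mj1 eqxx.
rewrite (dhomog_nemf_coeff hp hm) big1 // => j _.
case: eqP; rewrite ?mulr0 // => e.
by move: hm; rewrite -e mdeg_mj ?eqxx // -ltnS.
Qed.

Lemma vanish (F : numClosedFieldType) (p : {mpoly F[2]}) d b j :
  in_scheme_span d (Zgen F b) p -> (b <= j)%N -> (j <= d)%N -> p@_(mj d j) = 0.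
Proof.
move=> H hb hj.
pose mq := mj (d - b) (j - b).
have e : Zgen F b * 'X_[mq] = 'X_[mj d j].
  rewrite /Zgen /vy mpolyXn -mpolyXD; congr 'X_[_].
  apply/mnmP => i; rewrite mnmDE mulmnE mnm1E.
  case: (i2_cases i) => ->; rewrite ?mj0 ?mj1 /mq ?mj0 ?mj1.
    have -> : (inord 1 == ord0 :> 'I_2) = false.
      by apply/negbTE; rewrite -(inj_eq val_inj) /= inordK.
    rewrite mul0n add0n; lia.
  rewrite eqxx mul1n; lia.
have hd : mdeg (mj d j) == d by rewrite mdeg_mj.
have := H 'X_[mq]; rewrite e dhomogX => /(_ hd).
rewrite /apolar msuppX big_seq1 mcoeffX eqxx scale1r => h0.
have := congr1 (mcoeff 0) h0; rewrite mcoeff_mderivm addm0 mcoeff0 => /eqP.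
rewrite mulrn_eq0 => /orP [|/eqP //].
move=> h; exfalso; move: h; apply/negP; rewrite -lt0n.
apply: prodn_gt0 => i; rewrite ffactnn; exact: fact_gt0.
Qed.

Lemma embed1X (F : fieldType) (m : 'X_{1..2}) :
  embed1 'X_[m] = v4 F 0 ^+ (m ord0) * v4 F 1 ^+ (m (inord 1)).
Proof.
rewrite /embed1 comp_mpolyX !big_ord_recl big_ord0 mulr1 /=.
have <- : lift ord0 ord0 = inord 1 :> 'I_2 by apply: val_inj; rewrite /= inordK.
by [].
Qed.

Lemma embed2X (F : fieldType) (m : 'X_{1..2}) :
  embed2 'X_[m] = v4 F 2 ^+ (m ord0) * v4 F 3 ^+ (m (inord 1)).
Proof.
rewrite /embed2 comp_mpolyX !big_ord_recl big_ord0 mulr1 /=.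
have <- : lift ord0 ord0 = inord 1 :> 'I_2 by apply: val_inj; rewrite /= inordK.
by [].
Qed.

Lemma embed1_hom (F : fieldType) (p : {mpoly F[2]}) d : p \is d.-homog ->
  embed1 p = \sum_(j < d.+1) p@_(mj d j) *: (v4 F 0 ^+ (d - j) * v4 F 1 ^+ j).
Proof.
move=> hp; rewrite {1}(homog2 hp) /embed1 raddf_sum; apply: eq_bigr => j _.
by rewrite /= comp_mpolyZ -/(embed1 _) embed1X mj0 mj1.
Qed.

Lemma embed2_hom (F : fieldType) (p : {mpoly F[2]}) d : p \is d.-homog ->
  embed2 p = \sum_(j < d.+1) p@_(mj d j) *: (v4 F 2 ^+ (d - j) * v4 F 3 ^+ j).
Proof.
move=> hp; rewrite {1}(homog2 hp) /embed2 raddf_sum; apply: eq_bigr => j _.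
by rewrite /= comp_mpolyZ -/(embed2 _) embed2X mj0 mj1.
Qed.

Lemma prodsum (F : comNzRingType) (A : algType F) n1 n2 (x : 'I_n1 -> F) (y : 'I_n2 -> F)
   (X : 'I_n1 -> A) (Y : 'I_n2 -> A) :
  (\sum_j x j *: X j) * (\sum_k y k *: Y k) =
  \sum_j \sum_k (x j * y k) *: (X j * Y k).
Proof.
rewrite mulr_suml; apply: eq_bigr => j _; rewrite mulr_sumr; apply: eq_bigr => k _.
by rewrite -scalerAl -scalerAr scalerA.
Qed.

Lemma powexp (F : fieldType) (X Y : {mpoly F[4]}) (a b : F) d :
  (a *: X + b *: Y) ^+ d =
  \sum_(j < d.+1) (a ^+ (d - j) * b ^+ j * 'C(d, j)%:R) *: (X ^+ (d - j) * Y ^+ j).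
Proof.
rewrite exprDn; apply: eq_bigr => j _.
by rewrite !exprZn -scalerAl -scalerAr scalerA -scaler_nat scalerA mulrC.
Qed.


Lemma gcd_facts b1 b2 : (0 < b1)%N ->
  let g := gcdn b1 b2 in
  [/\ (0 < g)%N, b1 = (b1 %/ g) * g, b2 = (b2 %/ g) * g & coprime (b2 %/ g) (b1 %/ g)]%N.
Proof.
move=> hb g.
have g0 : (0 < g)%N by rewrite gcdn_gt0 hb.
have e1 : b1 = (b1 %/ g * g)%N by rewrite divnK // dvdn_gcdl.
have e2 : b2 = (b2 %/ g * g)%N by rewrite divnK // dvdn_gcdr.
split => //.
rewrite /coprime; apply/eqP.
have : (gcdn (b2 %/ g) (b1 %/ g) * g == 1 * g)%N.
  by rewrite mul1n muln_gcdl -e1 -e2 gcdnC.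
by rewrite eqn_pmul2r // => /eqP.
Qed.

(* key arithmetic: with P*g = b2, Q*g = b1 *)
Lemma key_div P Q g j k j' k' : coprime P Q -> (0 < g)%N ->
  (j < Q * g)%N -> (k < P * g)%N ->
  (P * j + Q * k = P * j' + Q * k')%N ->
  (Q * g %| (j' + (Q * g - j)) * g)%N.
Proof.
move=> cPQ g0 hj hk he.
rewrite dvdn_pmul2r //.
have hx : (P * (j' + (Q * g - j)) = Q * (k + P * g - k'))%N.
  have hk' : (Q * k' <= Q * k + P * Q * g)%N.
    have : (P * j <= P * (Q * g))%N by rewrite leq_mul2l ltnW ?orbT.
    lia.
  rewrite mulnDr mulnBr mulnBr mulnDr.
  have -> : (Q * (P * g) = P * (Q * g))%N by rewrite mulnCA.
  have : (P * j <= P * (Q * g))%N by rewrite leq_mul2l ltnW ?orbT.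
  have : (Q * k' <= Q * k + P * (Q * g))%N by move: hk'; rewrite mulnA.
  lia.
by rewrite -(Gauss_dvdr _ (_ : coprime Q P)) ?hx ?dvdn_mulr // coprime_sym.
Qed.

Lemma key_ne P Q g j k j' k' : (0 < g)%N ->
  (j < Q * g)%N -> (k < P * g)%N ->
  (P * j + Q * k = P * j' + Q * k')%N ->
  (Q * g %| j' + (Q * g - j))%N -> j = j' /\ k = k'.
Proof.
move=> g0 hj hk he /dvdnP [M hM].
case: M hM => [|M] hM; first lia.
case: M hM => [|M] hM.
  have ejj : j' = j by lia.
  subst j'; split => //.
  have : (Q * k = Q * k')%N by lia.
  case: Q hj {he hM} => [|Q] //= _ /eqP; rewrite eqn_mul2l /= => /eqP.
  done.
exfalso.
have hj' : (j' = j + M.+1 * (Q * g))%N by move: hM; rewrite mulSn; lia.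
subst j'.
move: he; rewrite mulnDr.
have -> : (P * (M.+1 * (Q * g)) = Q * (M.+1 * (P * g)))%N.
  by nia.
move=> he.
have : (Q * k = Q * (M.+1 * (P * g) + k'))%N by rewrite mulnDr; lia.
case: Q hj {he hM} => [|Q] //= _ /eqP; rewrite eqn_mul2l /= => /eqP.
move: hk; rewrite mulSn; lia.
Qed.

Lemma geom0 (F : fieldType) (r : F) g : r ^+ g = 1 -> r != 1 -> \sum_(c < g) r ^+ c = 0.
Proof.
move=> rg r1.
have h : (\sum_(c < g) r ^+ c) * r = \sum_(c < g) r ^+ c.
  have e1 : \sum_(c < g.+1) r ^+ c = r ^+ 0 + \sum_(c < g) r ^+ c.+1.
    by rewrite big_ord_recl.
  have e2 : \sum_(c < g.+1) r ^+ c = \sum_(c < g) r ^+ c + r ^+ g.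
    by rewrite big_ord_recr.
  have : \sum_(c < g) r ^+ c + r ^+ g = r ^+ 0 + \sum_(i < g) r ^+ i.+1.
    by rewrite -e1 -e2.
  rewrite rg expr0 addrC => /addrI e; rewrite {2}e.
  by rewrite mulr_suml; apply: eq_bigr => i _; rewrite -exprSr.
have : (\sum_(c < g) r ^+ c) * (r - 1) = 0 by rewrite mulrBr mulr1 h subrr.
by move/eqP; rewrite mulf_eq0 subr_eq0 (negbTE r1) orbF => /eqP.
Qed.

Lemma root_sum (F : fieldType) (eta : F) P Q g j k j' k' :
  (Q * g).-primitive_root eta -> coprime P Q -> (0 < g)%N ->
  (j < Q * g)%N -> (k < P * g)%N ->
  (P * j + Q * k = P * j' + Q * k')%N ->
  \sum_(c < g) eta ^+ (c * j') * eta ^+ (c * (Q * g - j)) =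
    if (j == j') && (k == k') then g%:R else 0.
Proof.
move=> pe cPQ g0 hj hk he.
have -> : \sum_(c < g) eta ^+ (c * j') * eta ^+ (c * (Q * g - j)) =
          \sum_(c < g) (eta ^+ (j' + (Q * g - j))) ^+ c.
  by apply: eq_bigr => c _; rewrite -exprD -exprM -mulnDr mulnC.
case: ifP => [/andP [/eqP ej /eqP ek] | hne].
  subst j'.
  have hjl : (j <= Q * g)%N by apply: ltnW.
  rewrite (subnKC hjl) (prim_expr_order pe).
  under eq_bigr => c _ do rewrite expr1n.
  by rewrite sumr_const card_ord.
apply: geom0.
  rewrite -exprM; apply/eqP; rewrite -(prim_order_dvd pe).
  exact: (key_div cPQ g0 hj hk he).
rewrite -(prim_order_dvd pe); apply/negP => hd.
have [e1 e2] := key_ne g0 hj hk he hd.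
by rewrite e1 e2 !eqxx in hne.
Qed.

Lemma prim_root_exists (F : numClosedFieldType) n : (n > 0)%N -> exists z : F, n.-primitive_root z.
Proof.
pose p : {poly F} := 'X^n - 1; have [r Dp] := closed_field_poly_normal p.
move=> n_gt0; rewrite (monicP _) ?monicXnsubC // scale1r in Dp.
have rn1: all n.-unity_root r by apply/allP=> z; rewrite -root_prod_XsubC -Dp.
have sz_r: (n < (size r).+1)%N.
  by rewrite -(size_prod_XsubC r id) -Dp size_XnsubC.
have [|z] := hasP (has_prim_root n_gt0 rn1 _ sz_r); last by exists z.
by rewrite -separable_prod_XsubC -Dp separable_Xn_sub_1 // pnatr_eq0 -lt0n.
Qed.

Lemma vander_solve (F : fieldType) n (tau : 'I_n -> F) (beta : nat -> F) :
  injective tau -> exists lam : 'I_n -> F,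
    forall e, (e < n)%N -> \sum_a lam a * tau a ^+ e = beta e.
Proof.
move=> itau.
pose V : 'M[F]_n := Vandermonde n (\row_j tau j).
have uV : V \in unitmx.
  rewrite unitmxE det_Vandermonde unitfE; apply/prodf_neq0 => i _.
  apply/prodf_neq0 => j ij; rewrite !mxE subr_eq0; apply/eqP => /itau eij.
  by move: ij; rewrite eij ltnn.
pose L := invmx V *m (\col_(i < n) beta i).
exists (fun a => L a 0) => e he.
have := congr1 (fun M : 'cV[F]_n => M (Ordinal he) 0) (mulKVmx uV (\col_(i < n) beta i)).
rewrite !mxE /= => <-; apply: eq_bigr => a _; rewrite !mxE mulrC.
by [].
Qed.

Lemma sum_if_eq (F : fieldType) b j (f : nat -> F) :
  \sum_(i < b) (if (i : nat) == j then f i else 0) = if (j < b)%N then f j else 0.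
Proof.
case: ifP => hj.
  rewrite (bigD1 (Ordinal hj)) //= eqxx big1 ?addr0 // => i hi.
  case: eqP => // ei; move: hi.
  by rewrite -(inj_eq val_inj) /= ei eqxx.
rewrite big1 // => i _; case: eqP => // ei.
by move: (ltn_ord i); rewrite ei hj.
Qed.

Lemma moments (F : numClosedFieldType) d1 d2 b1 b2 (u w : nat -> F) :
  (0 < b1)%N -> (0 < b2)%N ->
  exists (I : finType) (lam s t : I -> F), (#|I| <= d1*b2 + d2*b1 + gcdn b1 b2)%N /\
    forall j k, (j <= d1)%N -> (k <= d2)%N ->
      \sum_i lam i * s i ^+ j * t i ^+ k = if ((j < b1) && (k < b2))%N then u j * w k else 0.
Proof.
move=> hb1 hb2.
have [g0 e1 e2 cop] := gcd_facts b2 hb1.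
move: g0 e1 e2 cop.
set g := gcdn b1 b2; set P := (b2 %/ g)%N; set Q := (b1 %/ g)%N => g0 e1 e2 cop.
have [eta pe] := prim_root_exists F hb1.
pose n := (P * d1 + Q * d2).+1.
pose tau := fun a : 'I_n => (a : nat)%:R : F.
have itau : injective tau.
  by move=> a a' /eqP; rewrite /tau eqr_nat => /eqP /val_inj.
pose beta (c : nat) (e : nat) := (g%:R)^-1 * \sum_(j0 < b1) \sum_(k0 < b2)
   (if (P * j0 + Q * k0 == e)%N then u j0 * w k0 * eta ^+ (c * (b1 - j0)) else 0).
have : forall c : 'I_g, exists lam : 'I_n -> F,
    forall e, (e < n)%N -> \sum_a lam a * tau a ^+ e = beta c e.
  by move=> c; apply: vander_solve.
case/fin_all_exists => lamc hlamc.
exists ('I_g * 'I_n)%type.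
exists (fun i : 'I_g * 'I_n => lamc i.1 i.2), (fun i : 'I_g * 'I_n => eta ^+ i.1 * tau i.2 ^+ P),
  (fun i : 'I_g * 'I_n => tau i.2 ^+ Q).
split.
  rewrite card_prod !card_ord /n.
  rewrite {1}e1 {1}e2; nia.
move=> j k hj hk.
rewrite -(pair_bigA _ (fun c a => lamc c a * (eta ^+ c * tau a ^+ P) ^+ j * (tau a ^+ Q) ^+ k)) /=.
have he : (P * j + Q * k < n)%N.
  rewrite /n ltnS leq_add // leq_mul2l ?hj ?hk orbT //.
under eq_bigr => c _.
  have ee : forall a : 'I_n, lamc c a * (eta ^+ c * tau a ^+ P) ^+ j * (tau a ^+ Q) ^+ k
      = eta ^+ (c * j) * (lamc c a * tau a ^+ (P * j + Q * k)).
    by move=> a; rewrite exprMn -!exprM exprD; ring.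
  under eq_bigr => a _ do rewrite ee.
  rewrite -mulr_sumr hlamc //.
  over.
rewrite /beta.
under eq_bigr => c _ do rewrite mulrCA.
rewrite -mulr_sumr.
under eq_bigr => c _ do rewrite mulr_sumr.
rewrite exchange_big /=.
under eq_bigr => j0 _.
  under eq_bigr => c _ do rewrite mulr_sumr.
  rewrite exchange_big /=.
  under eq_bigr => k0 _.
    have pe' : (Q * g).-primitive_root eta by rewrite -e1.
    have -> : \sum_(c < g) eta ^+ (c * j) *
       (if (P * j0 + Q * k0 == P * j + Q * k)%N
        then u j0 * w k0 * eta ^+ (c * (b1 - j0)) else 0) =
       if ((j0 : nat) == j) && ((k0 : nat) == k) then u j0 * w k0 * g%:R else 0.
      case hc0 : (P * j0 + Q * k0 == P * j + Q * k)%N.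
        move/eqP: hc0 => hc.
        under eq_bigr => c _ do rewrite mulrCA mulrC.
        rewrite -mulr_suml.
        have hj0 : (j0 < Q * g)%N by rewrite -e1.
        have hk0 : (k0 < P * g)%N by rewrite -e2.
        have := root_sum pe' cop g0 hj0 hk0 hc; rewrite -e1 => ->.
        by case: ifP; rewrite ?mul0r // mulrC.
      rewrite big1; last by move=> c _; rewrite mulr0.
      case: ifP => // /andP [/eqP ej /eqP ek].
      by move: hc0; rewrite ej ek eqxx.
    over.
  over.
have hg : (g%:R : F) != 0 by rewrite pnatr_eq0 -lt0n.
under eq_bigr => j0 _.
  have -> : \sum_(k0 < b2) (if ((j0 : nat) == j) && ((k0 : nat) == k)
      then u j0 * w k0 * g%:R else 0) =
    if (j0 : nat) == j then \sum_(k0 < b2) (if (k0 : nat) == k then u j0 * w k0 * g%:R else 0) else 0.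
    by case: ifP => _ //=; rewrite big1.
  rewrite (sum_if_eq b2 k (fun k0 => u j0 * w k0 * g%:R)).
  over.
rewrite /= (sum_if_eq b1 j (fun j0 => if (k < b2)%N then u j0 * w k * g%:R else 0)).
case: (j < b1)%N; case: (k < b2)%N; rewrite ?mulr0 //=.
by rewrite mulrC mulfK.
Qed.

Unset Implicit Arguments.
Set Strict Implicit.

Theorem proposition3p9 (R : realType) (d1 d2 b1 b2 : nat)
  (T1 T2 : {mpoly R[i][2]}) :
  (2 <= b1)%N -> (b1 * 2 <= d1)%N ->
  (2 <= b2)%N -> (b2 * 2 <= d2)%N ->
  T1 \is d1.-homog -> T1 != 0 ->
  T2 \is d2.-homog -> T2 != 0 ->
  cactus_rank_eq d1 T1 b1 -> in_scheme_span d1 (Zgen _ b1) T1 ->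
  cactus_rank_eq d2 T2 b2 -> in_scheme_span d2 (Zgen _ b2) T2 ->
  psym_rank_le d1 d2 (tens T1 T2) (d1 * b2 + d2 * b1 + b1 * b2 - 1)%N.
Proof.
move=> hb1 hbd1 hb2 hbd2 hT1 _ hT2 _ _ hs1 _ hs2.
have hb1' : (0 < b1)%N by lia.
have hb2' : (0 < b2)%N by lia.
have hd1 : (0 < d1)%N by lia.
pose u := fun j => T1@_(mj d1 j) / ('C(d1, j))%:R.
pose w := fun k => T2@_(mj d2 k) / ('C(d2, k))%:R.
have [I [lam [s [t [hcard hmom]]]]] := moments d1 d2 u w hb1' hb2'.
exists #|I|; split.
  apply: leq_trans hcard _.
  have : (gcdn b1 b2 <= b1)%N by apply: dvdn_leq => //; apply: dvdn_gcdl.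
  nia.
pose ka := fun x : I => d1.-root (lam x).
exists (fun i => ka (enum_val i)), (fun i => ka (enum_val i) * s (enum_val i)),
  (fun _ => 1), (fun i => t (enum_val i)).
rewrite -(big_enum_val (fun x => (ka x *: v4 _ 0 + (ka x * s x) *: v4 _ 1) ^+ d1
   * (1 *: v4 _ 2 + t x *: v4 _ 3) ^+ d2)).
under eq_bigr => x _ do rewrite powexp powexp prodsum.
rewrite exchange_big /=.
under eq_bigr => j _ do rewrite exchange_big /=.
rewrite /tens (embed1_hom hT1) (embed2_hom hT2) prodsum.
apply: eq_bigr => j _; apply: eq_bigr => k _.
rewrite -scaler_suml; congr (_ *: _).
have hj : (j <= d1)%N by rewrite -ltnS.
have hk : (k <= d2)%N by rewrite -ltnS.
have ee : forall x : I, ka x ^+ (d1 - j) * (ka x * s x) ^+ j * 'C(d1, j)%:R *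
    (1 ^+ (d2 - k) * t x ^+ k * 'C(d2, k)%:R) =
    (lam x * s x ^+ j * t x ^+ k) * ('C(d1, j)%:R * 'C(d2, k)%:R).
  move=> x.
  have hka : lam x = ka x ^+ (d1 - j) * ka x ^+ j by rewrite -exprD subnK // rootCK.
  by rewrite hka exprMn expr1n; ring.
under eq_bigr => x _ do rewrite ee.
rewrite -mulr_suml hmom //.
have hC1 : ('C(d1, j)%:R : R[i]) != 0 by rewrite pnatr_eq0 -lt0n bin_gt0.
have hC2 : ('C(d2, k)%:R : R[i]) != 0 by rewrite pnatr_eq0 -lt0n bin_gt0.
case: ifP => [_ | /negbT].
  by rewrite /u /w; field; rewrite hC1 hC2.
rewrite negb_and -!leqNgt => /orP [hj' | hk'].
  by rewrite (vanish hs1 hj' hj) mul0r mul0r.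
by rewrite (vanish hs2 hk' hk) mulr0 mul0r.
Qed.
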